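(* For a topological space $X$ the following are equivalent: (1) $X$ is strongly star Hurewicz; (2) for every nonempty $A\subseteq X$ and every sequence $(\mathcal U_n:n\in\omega)$ of families of open subsets of $X$ with $\overline A\subseteq\bigcup\mathcal U_n$ for every $n$, there is a sequence $(F_n:n\in\omega)$ of finite subsets of $X$ such that every $x\in A$ belongs to $st(F_n,\mathcal U_n)$ for all but finitely many $n\in\omega$.
   Context: For a family $\mathcal U$ of subsets of $X$ and $A\subseteq X$, $st(A,\mathcal U)=\bigcup\{U\in\mathcal U: U\cap A\neq\emptyset\}$. $X$ is strongly star Hurewicz if for every sequence $(\mathcal U_n:n\in\omega)$ of open covers of $X$ there are finite $F_n\subseteq X$ such that every $x\in X$ belongs to $st(F_n,\mathcal U_n)$ for all but finitely many $n$. *)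

(* Defs.v *)
From mathcomp Require Import all_boot all_order.
From mathcomp Require Import all_classical all_reals all_analysis.
Set Implicit Arguments. Unset Strict Implicit. Unset Printing Implicit Defensive.
Local Open Scope classical_set_scope.

Definition star {X : Type} (A : set X) (U : set (set X)) : set X :=
  \bigcup_(V in U) [set x | V x /\ V `&` A !=set0].
Definition open_family {X : topologicalType} (U : set (set X)) : Prop :=
  forall V, U V -> open V.
Definition open_cover {X : topologicalType} (U : set (set X)) : Prop :=
  open_family U /\ setT `<=` \bigcup_(V in U) V.

Definition strongly_star_Hurewicz (X : topologicalType) : Prop :=
  forall U : nat -> set (set X), (forall n, open_cover (U n)) ->
  exists F : nat -> set X, (forall n, finite_set (F n)) /\
    forall x : X, \forall n \near \oo, star (F n) (U n) x.

(* Main.v *)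
Require Import Defs.
From mathcomp Require Import all_boot all_order.
From mathcomp Require Import all_classical all_reals all_analysis.
Local Open Scope classical_set_scope.

Theorem proposition4p1 (X : topologicalType) :
  strongly_star_Hurewicz X <->
  (forall (A : set X), A !=set0 ->
   forall U : nat -> set (set X),
     (forall n, open_family (U n)) ->
     (forall n, closure A `<=` \bigcup_(V in U n) V) ->
     exists F : nat -> set X, (forall n, finite_set (F n)) /\
       forall x, A x -> \forall n \near \oo, star (F n) (U n) x).
Proof.
split.
- move=> H A _ U Uo Ucov.
  pose W n := U n `|` [set ~` closure A].
  have Wc : forall n, open_cover (W n).
    move=> n; split.
      move=> V [/Uo //|->]; have := @closed_openC X (closure A) (@closed_closure X A); exact.
    move=> x _; have [xA|xA] := pselect (closure A x).
      have [V UV Vx] := Ucov n x xA; exists V => //; by left.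
    by exists (~` closure A) => //; right.
  have [F [Ff HF]] := H W Wc.
  exists F; split => // x Ax.
  apply: filterS (HF x) => n [V [UV|->]] [Vx VF].
    by exists V.
  by exfalso; apply: Vx; apply: subset_closure.
- move=> H U Uc.
  have [[x0 _]|X0] := pselect (exists x : X, True).
    have [|F [Ff HF]] := H setT (ex_intro _ x0 I) U (fun n => (Uc n).1).
      by move=> n x _; apply: (Uc n).2.
    by exists F; split => // x; apply: HF.
  exists (fun _ => set0); split => // x.
  by exfalso; apply: X0; exists x.
Qed.
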